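(* Let $q\in\mathbb{C}$ with $0<|q|\le 1$ and $A\in M_n$. (a) If $A\in\Pi^n_{s,\alpha}$ for some $\alpha\in[0,\pi/2)$, then $|q|\cos(\alpha)\,\|A\|\le w_q(A)\le \|A\|$. (b) If either $A,A^2\in\Pi^n_{s,\alpha}$ for some $\alpha\in[0,\pi/2)$, or $A$ is accretive-dissipative, then $\frac{|q|}{\sqrt2}\|A\|\le w_q(A)\le\|A\|$.
   Context: $M_n$ is the algebra of complex $n\times n$ matrices with the operator (spectral) norm $\|\cdot\|$. For $|q|\le1$, $W_q(A)=\{\langle Ax,y\rangle: x,y\in\mathbb{C}^n,\ \|x\|=\|y\|=1,\ \langle x,y\rangle=q\}$ and $w_q(A)=\sup\{|z|:z\in W_q(A)\}$. The numerical range is $W(A)=\{\langle Ax,x\rangle:\|x\|=1\}$. For $\alpha\in[0,\pi/2)$, $S_\alpha=\{z\in\mathbb{C}:\operatorname{Re}z>0,\ |\operatorname{Im}z|\le\tan(\alpha)\operatorname{Re}z\}$ and $\Pi^n_{s,\alpha}=\{A\in M_n: W(A)\subseteq S_\alpha\}$ (sectorial matrices). With $\mathcal{R}(A)=\frac{A+A^*}{2}$, $\mathcal{I}(A)=\frac{A-A^*}{2i}$, $A$ is accretive-dissipative if $\mathcal{R}(A)>0$ and $\mathcal{I}(A)>0$ (positive definite). *)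

(* Defs.v *)
From HB Require Import structures.
From mathcomp Require Import all_boot all_order all_algebra.
From mathcomp Require Import complex.
From mathcomp Require Import boolp classical_sets reals trigo.
Set Implicit Arguments. Unset Strict Implicit. Unset Printing Implicit Defensive.
Import Order.TTheory GRing.Theory Num.Theory.
Local Open Scope ring_scope.
Local Open Scope complex_scope.

Section Defs.
Variable R : realType.
Local Notation C := R[i].

Definition cabs (z : C) : R := Num.sqrt (complex.Re z ^+ 2 + complex.Im z ^+ 2).

Definition cdot n (x y : 'cV[C]_n) : C := \sum_(i < n) x i 0 * (y i 0)^*.

Definition vnorm n (x : 'cV[C]_n) : R := Num.sqrt (complex.Re (cdot x x)).

Definition adjmx n (A : 'M[C]_n) : 'M[C]_n := \matrix_(i, j) (A j i)^*.

Definition opnorm n (A : 'M[C]_n) : R :=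
  reals.sup [set vnorm (A *m x) | x in [set x : 'cV[C]_n | vnorm x = 1]]%classic.

Definition qnumrange n (q : C) (A : 'M[C]_n) : C -> Prop :=
  fun z => exists x y : 'cV[C]_n,
    [/\ vnorm x = 1, vnorm y = 1, cdot x y = q & z = cdot (A *m x) y].

Definition qnumradius n (q : C) (A : 'M[C]_n) : R :=
  reals.sup [set cabs z | z in qnumrange q A]%classic.

Definition numrange n (A : 'M[C]_n) : C -> Prop :=
  fun z => exists x : 'cV[C]_n, vnorm x = 1 /\ z = cdot (A *m x) x.

Definition sector (alpha : R) : C -> Prop :=
  fun z => 0 < complex.Re z /\ `|complex.Im z| <= tan alpha * complex.Re z.

Definition sectorial n (alpha : R) (A : 'M[C]_n) : Prop :=
  forall z, numrange A z -> sector alpha z.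

Definition realpart n (A : 'M[C]_n) : 'M[C]_n := (2%:R)^-1 *: (A + adjmx A).
Definition imagpart n (A : 'M[C]_n) : 'M[C]_n := ((2%:R) * 'i)^-1 *: (A - adjmx A).

(* positive definite: Hermitian and <Hx,x> > 0 (in the order of C, i.e. real
   and positive) for every nonzero x *)
Definition posdef n (H : 'M[C]_n) : Prop :=
  adjmx H = H /\ forall x : 'cV[C]_n, x != 0 -> 0 < cdot (H *m x) x.

Definition accretive_dissipative n (A : 'M[C]_n) : Prop :=
  posdef (realpart A) /\ posdef (imagpart A).

End Defs.

(* Main.v *)
Require Import Defs.
From HB Require Import structures.
From mathcomp Require Import all_boot all_order all_algebra.
From mathcomp Require Import complex.
From mathcomp Require Import boolp classical_sets reals trigo.
From mathcomp Require Import ring lra.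
Import Order.TTheory GRing.Theory Num.Theory.
Local Open Scope ring_scope.
Local Open Scope complex_scope.

Section Part1.
Set Implicit Arguments. Unset Strict Implicit. Unset Printing Implicit Defensive.

Section Basic.
Variable R : realType.
Local Notation C := R[i].

Definition n2 (z : C) : R := complex.Re z ^+ 2 + complex.Im z ^+ 2.

Lemma realCD (a b : R) : (a + b)%:C = a%:C + b%:C.
Proof. by rewrite rmorphD. Qed.
Lemma realCM (a b : R) : (a * b)%:C = a%:C * b%:C.
Proof. by rewrite rmorphM. Qed.
Lemma realCN (a : R) : (- a)%:C = - a%:C.
Proof. by rewrite rmorphN. Qed.
Lemma realCB (a b : R) : (a - b)%:C = a%:C - b%:C.
Proof. by rewrite rmorphB. Qed.
Lemma realCX (a : R) k : (a ^+ k)%:C = a%:C ^+ k.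
Proof. by rewrite rmorphXn. Qed.

Local Notation cj := (@Num.conj _).
Lemma conjcE (z : C) : conjc z = cj z.
Proof. by []. Qed.
Lemma conjcM (a b : C) : cj (a * b) = cj a * cj b.
Proof. by rewrite rmorphM. Qed.
Lemma conjcD (a b : C) : cj (a + b) = cj a + cj b.
Proof. by rewrite rmorphD. Qed.
Lemma conjcN (a : C) : cj (- a) = - cj a.
Proof. by rewrite rmorphN. Qed.
Lemma conjcB (a b : C) : cj (a - b) = cj a - cj b.
Proof. by rewrite rmorphB. Qed.
Lemma conjc_sum (I : Type) (r : seq I) (P : pred I) (F : I -> C) :
  cj (\sum_(i <- r | P i) F i) = \sum_(i <- r | P i) cj (F i).
Proof. by rewrite rmorph_sum. Qed.
Lemma conjcRe (a : R) : cj (a%:C) = a%:C.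
Proof. by rewrite -conjcE conjc_real. Qed.
Lemma conjcKK (a : C) : cj (cj a) = a.
Proof. exact: conjCK. Qed.

Lemma n2_ge0 (z : C) : 0 <= n2 z.
Proof. by rewrite /n2 addr_ge0 // sqr_ge0. Qed.

Lemma cabs_ge0 (z : C) : 0 <= cabs z.
Proof. exact: sqrtr_ge0. Qed.

Lemma cabs_sq (z : C) : cabs z ^+ 2 = n2 z.
Proof. by rewrite /cabs sqr_sqrtr // n2_ge0. Qed.

Lemma cabsC (z : C) : (cabs z)%:C = `|z|.
Proof. by rewrite normc_def. Qed.


Lemma n2C (z : C) : (n2 z)%:C = z * cj z.
Proof. by rewrite -normCK -cabsC -cabs_sq realCX. Qed.

Lemma cabsM (a b : C) : cabs (a * b) = cabs a * cabs b.
Proof. by have := cabsC (a * b); rewrite normrM -!cabsC -realCM => -[]. Qed.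

Lemma cabsD (a b : C) : cabs (a + b) <= cabs a + cabs b.
Proof. by rewrite -lecR realCD !cabsC ler_normD. Qed.

Lemma n2M (a b : C) : n2 (a * b) = n2 a * n2 b.
Proof. by rewrite -!cabs_sq cabsM exprMn. Qed.

Lemma Re_le_cabs (z : C) : complex.Re z <= cabs z.
Proof.
rewrite /cabs; have := ler_norm (complex.Re z); move/le_trans; apply.
rewrite -(@ler_pXn2r _ 2) ?nnegrE ?sqrtr_ge0 //= sqr_sqrtr ?n2_ge0 //.
by rewrite real_normK ?num_real // lerDl sqr_ge0.
Qed.

Lemma Im_le_cabs (z : C) : `|complex.Im z| <= cabs z.
Proof.
rewrite /cabs -(@ler_pXn2r _ 2) ?nnegrE ?sqrtr_ge0 //= sqr_sqrtr ?n2_ge0 //.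
by rewrite real_normK ?num_real // lerDr sqr_ge0.
Qed.

Lemma cabs_conj (z : C) : cabs (cj z) = cabs z.
Proof. by rewrite -conjcE; case: z => a b; rewrite /cabs /= sqrrN. Qed.

Lemma cabs_real (k : R) : cabs (k%:C) = `|k|.
Proof. by rewrite /cabs /= expr0n /= addr0 sqrtr_sqr. Qed.

End Basic.

End Part1.

Section Part2.
Set Implicit Arguments. Unset Strict Implicit. Unset Printing Implicit Defensive.

Section Cdot.
Variable R : realType.
Local Notation C := R[i].
Variable n : nat.
Local Notation cj := (@Num.conj _).
Implicit Types (x y z : 'cV[C]_n) (M N : 'M[C]_n) (a b : C).

Lemma cdotDl x y z : cdot (x + y) z = cdot x z + cdot y z.
Proof. by rewrite /cdot -big_split /=; apply: eq_bigr => i _; rewrite mxE mulrDl. Qed.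

Lemma cdotZl a x z : cdot (a *: x) z = a * cdot x z.
Proof. by rewrite /cdot mulr_sumr; apply: eq_bigr => i _; rewrite mxE mulrA. Qed.

Lemma cdotDr x y z : cdot x (y + z) = cdot x y + cdot x z.
Proof. by rewrite /cdot -big_split /=; apply: eq_bigr => i _; rewrite mxE conjcD mulrDr. Qed.

Lemma cdotZr a x z : cdot x (a *: z) = cj a * cdot x z.
Proof. by rewrite /cdot mulr_sumr; apply: eq_bigr => i _; rewrite mxE conjcM mulrCA. Qed.

Lemma cdotC x y : cdot y x = cj (cdot x y).
Proof.
rewrite /cdot conjc_sum; apply: eq_bigr => i _; by rewrite conjcM conjcKK mulrC.
Qed.

Lemma cdotNl x z : cdot (- x) z = - cdot x z.
Proof. by rewrite -scaleN1r cdotZl mulN1r. Qed.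

Lemma cdotBl x y z : cdot (x - y) z = cdot x z - cdot y z.
Proof. by rewrite cdotDl cdotNl. Qed.

Lemma cdotNr x z : cdot x (- z) = - cdot x z.
Proof. by rewrite -scaleN1r cdotZr conjcN conjC1 mulN1r. Qed.

Lemma cdotBr x y z : cdot x (y - z) = cdot x y - cdot x z.
Proof. by rewrite cdotDr cdotNr. Qed.

Lemma cdot0l z : cdot 0 z = 0.
Proof. by rewrite /cdot big1 // => i _; rewrite mxE mul0r. Qed.

Lemma cdot0r z : cdot z 0 = 0.
Proof. by rewrite cdotC cdot0l conjC0. Qed.

Lemma adjmxK M : adjmx (adjmx M) = M.
Proof. by apply/matrixP => i j; rewrite !mxE !conjcE; apply: conjCK. Qed.

Lemma adjmxD M N : adjmx (M + N) = adjmx M + adjmx N.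
Proof. by apply/matrixP => i j; rewrite !mxE !conjcE conjcD. Qed.

Lemma adjmxZ a M : adjmx (a *: M) = cj a *: adjmx M.
Proof. by apply/matrixP => i j; rewrite !mxE !conjcE conjcM. Qed.

Lemma adjmxN M : adjmx (- M) = - adjmx M.
Proof. by apply/matrixP => i j; rewrite !mxE !conjcE conjcN. Qed.

Lemma adjmxB M N : adjmx (M - N) = adjmx M - adjmx N.
Proof. by rewrite adjmxD adjmxN. Qed.

Lemma cdot_adj M x y : cdot (M *m x) y = cdot x (adjmx M *m y).
Proof.
rewrite /cdot.
under eq_bigr => i _ do rewrite mxE big_distrl /=.
rewrite exchange_big /=; apply: eq_bigr => j _.
rewrite mxE conjc_sum mulr_sumr; apply: eq_bigr => i _.
by rewrite !mxE !conjcE conjcM conjcKK mulrCA mulrA.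
Qed.

Lemma cdot_adj2 M x y : cdot x (M *m y) = cdot (adjmx M *m x) y.
Proof. by rewrite cdot_adj adjmxK. Qed.

Lemma cdot_self_ge0 x : 0 <= cdot x x.
Proof.
by rewrite /cdot sumr_ge0 // => i _; rewrite -normCK exprn_ge0.
Qed.

Lemma cdot_self_real x : cdot x x = (complex.Re (cdot x x))%:C.
Proof. by rewrite RRe_real // ger0_real // cdot_self_ge0. Qed.

Lemma cdot_self_Re_ge0 x : 0 <= complex.Re (cdot x x).
Proof. by rewrite -lecR -cdot_self_real cdot_self_ge0. Qed.

Lemma cdot_self_eq0 x : cdot x x = 0 -> x = 0.
Proof.
rewrite /cdot => /eqP; rewrite psumr_eq0 => [/allP H|i _]; last first.
  by rewrite -normCK exprn_ge0.
apply/matrixP => i j; rewrite (ord1 j) mxE.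
have /H : i \in index_enum 'I_n by rewrite mem_index_enum.
by rewrite /= -normCK sqrf_eq0 normr_eq0 => /eqP.
Qed.

Lemma vnorm_ge0 x : 0 <= vnorm x.
Proof. exact: sqrtr_ge0. Qed.

Lemma vnorm_sq x : vnorm x ^+ 2 = complex.Re (cdot x x).
Proof. by rewrite /vnorm sqr_sqrtr // cdot_self_Re_ge0. Qed.

Lemma vnorm_sqC x : (vnorm x ^+ 2)%:C = cdot x x.
Proof. by rewrite vnorm_sq -cdot_self_real. Qed.

Lemma vnorm_gt0 x : x != 0 -> 0 < vnorm x.
Proof.
move=> nx; rewrite lt_def vnorm_ge0 andbT; apply/eqP => h.
by move/eqP: nx; apply; apply: cdot_self_eq0; rewrite -vnorm_sqC h expr0n.
Qed.

End Cdot.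

End Part2.

Section Part3.
Set Implicit Arguments. Unset Strict Implicit. Unset Printing Implicit Defensive.

Lemma quad_lemma (R : realType) (a d N : R) : 0 <= a -> 0 <= d -> 0 <= N ->
  (forall t, 0 <= a - 2 * t * N + t ^+ 2 * N * d) -> N <= a * d.
Proof.
move=> a0 d0 N0 H.
have [dp|] := ltrP 0 d.
  have := H d^-1; set e := d^-1.
  have ed : e * d = 1 by rewrite mulVf // gt_eqF.
  have e0 : 0 < e by rewrite invr_gt0.
  move=> h; have : 0 <= (a - 2 * e * N + e ^+ 2 * N * d) * d by rewrite mulr_ge0 // ltW.
  have -> : (a - 2 * e * N + e ^+ 2 * N * d) * d = a * d - N.
    transitivity (a * d - 2 * N * (e * d) + N * (e * d) ^+ 2); first by ring.
    by rewrite ed; ring.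
  by rewrite subr_ge0.
move=> dle; have d00 : d = 0 by apply/le_anti; rewrite dle d0.
rewrite d00 mulr0; case: (ltrP 0 N) => // Np.
have := H ((a + 1) / (2 * N)); rewrite d00 mulr0 addr0.
have -> : a - 2 * ((a + 1) / (2 * N)) * N = -1.
  by field; rewrite gt_eqF.
by rewrite oppr_ge0 ler10.
Qed.

Section Forms.
Variable R : realType.
Local Notation C := R[i].
Local Notation cj := (@Num.conj _).
Variable n : nat.
Implicit Types (x y z u : 'cV[C]_n) (M N H : 'M[C]_n) (a b : C).

Lemma real_of_conj (z : C) : cj z = z -> z = (complex.Re z)%:C.
Proof. by move=> h; rewrite RRe_real //; apply/CrealP. Qed.

Lemma herm_sym H x y : adjmx H = H -> cdot (H *m y) x = cj (cdot (H *m x) y).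
Proof. by move=> hH; rewrite cdot_adj hH -cdotC. Qed.

Lemma herm_real H x : adjmx H = H -> cdot (H *m x) x = (complex.Re (cdot (H *m x) x))%:C.
Proof. by move=> hH; apply: real_of_conj; rewrite -herm_sym. Qed.

Lemma CS H x y : adjmx H = H -> (forall u, 0 <= complex.Re (cdot (H *m u) u)) ->
  n2 (cdot (H *m x) y) <=
  complex.Re (cdot (H *m x) x) * complex.Re (cdot (H *m y) y).
Proof.
move=> hH psd; set b := cdot (H *m x) y.
set a := complex.Re (cdot (H *m x) x); set d := complex.Re (cdot (H *m y) y).
apply: quad_lemma; rewrite ?psd ?n2_ge0 // => t.
have := psd (x - (t%:C * b) *: y).
have -> : cdot (H *m (x - (t%:C * b) *: y)) (x - (t%:C * b) *: y) =
   (a - 2 * t * n2 b + t ^+ 2 * n2 b * d)%:C.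
  rewrite mulmxBr -scalemxAr cdotBl !cdotBr !cdotZl !cdotZr.
  rewrite (herm_sym x y hH) -/b.
  rewrite realCD realCB !realCM n2C -/b.
  rewrite (herm_real x hH) (herm_real y hH) -/a -/d.
  rewrite conjcM conjcRe.
  have -> : (2 : R)%:C = 2 by rewrite rmorphMn.
  ring.
by rewrite /= => h; exact: h.
Qed.

End Forms.

End Part3.

Section Part4.
Set Implicit Arguments. Unset Strict Implicit. Unset Printing Implicit Defensive.

Section RI.
Variable R : realType.
Local Notation C := R[i].
Local Notation cj := (@Num.conj _).
Local Notation ii := ('i%C : C).
Variable n : nat.
Implicit Types (x y z u : 'cV[C]_n) (M N H : 'M[C]_n) (a b : C).

Lemma ii_neq0 : ii != 0.
Proof. by apply/negP => /eqP [] /eqP; rewrite oner_eq0. Qed.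

Lemma ii2 : ii * ii = -1.
Proof. by rewrite -expr2 sqr_i. Qed.

Lemma two_neq0 : (2 : C) != 0.
Proof. by rewrite pnatr_eq0. Qed.

Lemma inv2i : (2 * ii)^-1 = - ii / 2.
Proof.
apply: (@mulfI _ (2 * ii)); first by rewrite mulf_neq0 ?ii_neq0 ?two_neq0.
rewrite mulfV ?mulf_neq0 ?ii_neq0 ?two_neq0 //.
transitivity (- (ii * ii) * (2 / 2)); last by ring.
by rewrite ii2 opprK mul1r divff ?two_neq0.
Qed.

Lemma conj_ii : cj ii = - ii.
Proof. by rewrite -conjcE; apply/eqP; rewrite eq_complex /= oppr0 !eqxx. Qed.

Lemma conj_2 : cj (2 : C) = 2.
Proof. by rewrite conjC_nat. Qed.

Lemma conj_inv2 : cj (2^-1 : C) = 2^-1.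
Proof. by apply/CrealP; rewrite rpredV // realn. Qed.

Lemma conj_inv2i : cj ((2 * ii)^-1) = - (2 * ii)^-1.
Proof. by rewrite inv2i conjcM conjcN conj_inv2 conj_ii opprK mulNr opprK. Qed.

Lemma realpart_h M u : cdot (realpart M *m u) u = (complex.Re (cdot (M *m u) u))%:C.
Proof.
rewrite /realpart -scalemxAl mulmxDl cdotZl cdotDl (cdot_adj (adjmx M)) adjmxK (cdotC (M *m u) u).
by rewrite ReJ_add conjcE mulrC.
Qed.

Lemma imagpart_h M u : cdot (imagpart M *m u) u = (complex.Im (cdot (M *m u) u))%:C.
Proof.
rewrite /imagpart -scalemxAl mulmxBl cdotZl cdotBl (cdot_adj (adjmx M)) adjmxK (cdotC (M *m u) u).
rewrite ImJ_sub conjcE inv2i; set h := cdot _ _; ring.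
Qed.

Lemma realpart_herm M : adjmx (realpart M) = realpart M.
Proof. by rewrite /realpart adjmxZ adjmxD adjmxK conj_inv2 addrC. Qed.

Lemma imagpart_herm M : adjmx (imagpart M) = imagpart M.
Proof.
by rewrite /imagpart adjmxZ adjmxB adjmxK conj_inv2i scaleNr -scalerN opprB.
Qed.

Lemma decomp M : M = realpart M + ii *: imagpart M.
Proof.
apply/matrixP => i j; rewrite /realpart /imagpart !mxE inv2i.
move: (M i j) (conjc (M j i)) => a b.
transitivity (2^-1 * (a + b) - (ii * ii) * (a - b) / 2); last by ring.
by rewrite ii2; field.
Qed.

End RI.

End Part4.

Section Part5.
Set Implicit Arguments. Unset Strict Implicit. Unset Printing Implicit Defensive.

Lemma RL (R : realType) (s c a b X u v p q p' q' : R) :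
  0 < s -> 0 < c -> 0 <= X -> 0 <= u -> 0 <= v -> 0 <= p -> 0 <= q -> 0 <= p' -> 0 <= q' ->
  u ^+ 2 <= p * q -> v ^+ 2 <= p' * q' -> 2 * s * c * X <= u + v ->
  p + p' = 2 * s * a -> q + q' = 2 * s * b -> c ^+ 2 * X ^+ 2 <= a * b.
Proof.
move=> s0 c0 X0 u0 v0 p0 q0 p'0 q'0 hu hv hX hp hq.
have h1 : (u * v) ^+ 2 <= (p * q) * (p' * q').
  rewrite exprMn; apply: ler_pM => //; rewrite ?sqr_ge0 //.
have h2 : (2 * (u * v)) ^+ 2 <= (p * q' + p' * q) ^+ 2.
  have e1 : (2 * (u * v)) ^+ 2 = 4 * (u * v) ^+ 2 by ring.
  have e2 : (p * q' + p' * q) ^+ 2 = 4 * ((p * q) * (p' * q')) + (p * q' - p' * q) ^+ 2 by ring.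
  rewrite e1 e2; have := sqr_ge0 (p * q' - p' * q); lra.
have h3 : 2 * (u * v) <= p * q' + p' * q.
  rewrite -(@ler_pXn2r _ 2) ?nnegrE //.
  by rewrite mulr_ge0 // mulr_ge0.
  by rewrite addr_ge0 // mulr_ge0.
have h4 : (u + v) ^+ 2 <= (p + p') * (q + q') by nra.
have h5 : (2 * s * c * X) ^+ 2 <= (u + v) ^+ 2.
  rewrite ler_pXn2r ?nnegrE //; last by rewrite addr_ge0.
  by rewrite !mulr_ge0 // ltW.
rewrite hp hq in h4.
have : (2 * s) ^+ 2 * (c ^+ 2 * X ^+ 2) <= (2 * s) ^+ 2 * (a * b) by nra.
by rewrite ler_pM2l // exprn_gt0 // mulr_gt0.
Qed.

Section KL.
Variable R : realType.
Local Notation C := R[i].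
Local Notation cj := (@Num.conj _).
Local Notation ii := ('i%C : C).
Variable n : nat.
Implicit Types (x y z u : 'cV[C]_n) (M N H : 'M[C]_n) (a b : C).

Lemma n2_eq0 (z : C) : n2 z = 0 -> z = 0.
Proof.
case: z => a b; rewrite /n2 /= => /eqP; rewrite paddr_eq0 ?sqr_ge0 //.
by rewrite !sqrf_eq0 => /andP[/eqP -> /eqP ->].
Qed.

Lemma cabs_cs (c s : R) : s ^+ 2 + c ^+ 2 = 1 ->
  cabs (c%:C + ii * s%:C) = 1 /\ cabs (c%:C - ii * s%:C) = 1.
Proof.
move=> h.
have -> : c%:C + ii * s%:C = Complex c s by apply/eqP; simpc.
have -> : c%:C - ii * s%:C = Complex c (- s) by apply/eqP; simpc.
by rewrite /cabs /= sqrrN addrC h sqrtr1.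
Qed.

Lemma KL M (s c : R) : 0 < c -> 0 <= s -> s ^+ 2 + c ^+ 2 = 1 ->
  (forall u, 0 <= complex.Re (cdot (M *m u) u)) ->
  (forall u, c * `|complex.Im (cdot (M *m u) u)| <= s * complex.Re (cdot (M *m u) u)) ->
  forall x y, c ^+ 2 * n2 (cdot (M *m x) y) <=
     complex.Re (cdot (M *m x) x) * complex.Re (cdot (M *m y) y).
Proof.
move=> c0 s0 sc hRe hsec x y.
have hR := realpart_herm M; have hI := imagpart_herm M.
have hRr u : cdot (realpart M *m u) u = (complex.Re (cdot (M *m u) u))%:C by rewrite realpart_h.
have hIr u : cdot (imagpart M *m u) u = (complex.Im (cdot (M *m u) u))%:C by rewrite imagpart_h.
have eB : cdot (M *m x) y = cdot (realpart M *m x) y + ii * cdot (imagpart M *m x) y.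
  by rewrite {1}(decomp M) mulmxDl -scalemxAl cdotDl cdotZl.
move: (realpart M) (imagpart M) hR hI hRr hIr eB => Rm Im hR hI hRr hIr eB.
have eR u : complex.Re (cdot (Rm *m u) u) = complex.Re (cdot (M *m u) u) by rewrite hRr.
have eI u : complex.Re (cdot (Im *m u) u) = complex.Im (cdot (M *m u) u) by rewrite hIr.
have [sp|sle] := ltrP 0 s; last first.
  have s00 : s = 0 by apply/le_anti; rewrite sle s0.
  have c2 : c ^+ 2 = 1 by rewrite -sc s00 expr0n /= add0r.
  have hI0 u : complex.Im (cdot (M *m u) u) = 0.
    have := hsec u; rewrite s00 mul0r => h.
    apply/eqP; rewrite -normr_eq0; apply/eqP/le_anti; rewrite normr_ge0 andbT.
    by move: h; rewrite pmulr_rle0.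
  have psdI u : 0 <= complex.Re (cdot (Im *m u) u) by rewrite eI hI0.
  have := CS x y hI psdI; rewrite !eI !hI0 mulr0 => h.
  have Ixy : cdot (Im *m x) y = 0 by apply: n2_eq0; apply/le_anti; rewrite h n2_ge0.
  rewrite eB Ixy mulr0 addr0 c2 mul1r.
  by have := CS x y hR; rewrite !eR; apply => u; rewrite eR.
have hPp : adjmx (s%:C *: Rm - c%:C *: Im) = s%:C *: Rm - c%:C *: Im.
  by rewrite adjmxB (adjmxZ _ Rm) (adjmxZ _ Im) (conjcRe s) (conjcRe c) hR hI.
have hPm : adjmx (s%:C *: Rm + c%:C *: Im) = s%:C *: Rm + c%:C *: Im.
  by rewrite adjmxD (adjmxZ _ Rm) (adjmxZ _ Im) (conjcRe s) (conjcRe c) hR hI.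
have ePp u v : cdot ((s%:C *: Rm - c%:C *: Im) *m u) v = s%:C * cdot (Rm *m u) v - c%:C * cdot (Im *m u) v.
  by rewrite mulmxBl -!scalemxAl cdotBl !cdotZl.
have ePm u v : cdot ((s%:C *: Rm + c%:C *: Im) *m u) v = s%:C * cdot (Rm *m u) v + c%:C * cdot (Im *m u) v.
  by rewrite mulmxDl -!scalemxAl cdotDl !cdotZl.
move: (s%:C *: Rm - c%:C *: Im) (s%:C *: Rm + c%:C *: Im) hPp hPm ePp ePm => Pp Pm hPp hPm ePp ePm.
have rPp u : complex.Re (cdot (Pp *m u) u) =
    s * complex.Re (cdot (M *m u) u) - c * complex.Im (cdot (M *m u) u).
  by rewrite ePp hRr hIr -!realCM -realCB.
have rPm u : complex.Re (cdot (Pm *m u) u) =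
    s * complex.Re (cdot (M *m u) u) + c * complex.Im (cdot (M *m u) u).
  by rewrite ePm hRr hIr -!realCM -realCD.
have gPp u : 0 <= complex.Re (cdot (Pp *m u) u).
  rewrite rPp subr_ge0; apply: le_trans (hsec u).
  by rewrite ler_pM2l // real_ler_norm // num_real.
have gPm u : 0 <= complex.Re (cdot (Pm *m u) u).
  rewrite rPm -lerBlDr sub0r; apply: le_trans (hsec u).
  by rewrite -mulrN ler_pM2l // -normrN real_ler_norm // num_real.
have id2 : (2 * s * c)%:C * cdot (M *m x) y =
   (c%:C - ii * s%:C) * cdot (Pp *m x) y + (c%:C + ii * s%:C) * cdot (Pm *m x) y.
  rewrite eB ePp ePm !realCM.
  have -> : (2 : R)%:C = 2 by rewrite rmorphMn.
  ring.
have [cs1 cs2] := cabs_cs sc.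
have hX : 2 * s * c * cabs (cdot (M *m x) y) <=
    cabs (cdot (Pp *m x) y) + cabs (cdot (Pm *m x) y).
  have := cabsD ((c%:C - ii * s%:C) * cdot (Pp *m x) y) ((c%:C + ii * s%:C) * cdot (Pm *m x) y).
  rewrite -id2 !cabsM cs1 cs2 !mul1r cabs_real ger0_norm //.
  by rewrite !mulr_ge0 // ltW.
rewrite -cabs_sq.
apply: (RL sp c0 (cabs_ge0 _) (cabs_ge0 _) (cabs_ge0 _) (gPp x) (gPp y) (gPm x) (gPm y) _ _ hX).
- by rewrite cabs_sq; exact: CS x y hPp gPp.
- by rewrite cabs_sq; exact: CS x y hPm gPm.
- by rewrite rPp rPm; ring.
- by rewrite rPp rPm; ring.
Qed.

End KL.

End Part5.

Section Part6.
Set Implicit Arguments. Unset Strict Implicit. Unset Printing Implicit Defensive.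

Section Bound.
Variable R : realType.
Local Notation C := R[i].
Local Notation cj := (@Num.conj _).
Variable n : nat.
Implicit Types (x y z u v w : 'cV[C]_n) (M N H : 'M[C]_n) (a b : C).

Lemma realC_sum (I : Type) (r : seq I) (P : pred I) (F : I -> R) :
  (\sum_(i <- r | P i) F i)%:C = \sum_(i <- r | P i) (F i)%:C.
Proof. by rewrite rmorph_sum. Qed.

Lemma cdot_self_sum v : complex.Re (cdot v v) = \sum_i n2 (v i 0).
Proof.
have -> : cdot v v = (\sum_i n2 (v i 0))%:C.
  by rewrite realC_sum; apply: eq_bigr => i _; rewrite n2C.
by [].
Qed.

Lemma coord_le v j : cabs (v j 0) <= vnorm v.
Proof.
rewrite -(@ler_pXn2r _ 2) ?nnegrE ?cabs_ge0 ?vnorm_ge0 //.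
rewrite cabs_sq vnorm_sq cdot_self_sum (bigD1 j) //= lerDl.
by apply: sumr_ge0 => i _; apply: n2_ge0.
Qed.

Definition Kb M : R := \sum_i \sum_j cabs (M i j).

Lemma Kb_ge0 M : 0 <= Kb M.
Proof. by apply: sumr_ge0 => i _; apply: sumr_ge0 => j _; apply: cabs_ge0. Qed.

Lemma cdot_bound M v w : cabs (cdot (M *m v) w) <= Kb M * vnorm v * vnorm w.
Proof.
rewrite -lecR cabsC !realCM /Kb realC_sum /cdot.
apply: le_trans (ler_norm_sum _ _ _) _.
rewrite !mulr_suml; apply: ler_sum => i _.
rewrite normrM -conjcE normcJ mxE.
apply: ler_pM; rewrite ?normr_ge0 //; last by rewrite -cabsC lecR coord_le.
apply: le_trans (ler_norm_sum _ _ _) _.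
rewrite realC_sum mulr_suml; apply: ler_sum => j _.
rewrite normrM -!cabsC; apply: ler_pM; rewrite ?lecR ?cabs_ge0 //.
exact: coord_le.
Qed.

Lemma adjmx1 : adjmx (1%:M : 'M[C]_n) = 1%:M.
Proof.
apply/matrixP => i j; rewrite !mxE (eq_sym j i).
by case: (i == j); [exact: conjc1 | exact: conjc0].
Qed.

Lemma cdot_CS x y : n2 (cdot x y) <= complex.Re (cdot x x) * complex.Re (cdot y y).
Proof.
have := @CS R n 1%:M x y adjmx1; rewrite !mul1mx; apply => u.
by rewrite mul1mx cdot_self_Re_ge0.
Qed.

Lemma cdot_CS_abs x y : cabs (cdot x y) <= vnorm x * vnorm y.
Proof.
rewrite -(@ler_pXn2r _ 2) ?nnegrE ?cabs_ge0 ?mulr_ge0 ?vnorm_ge0 //.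
by rewrite cabs_sq exprMn !vnorm_sq cdot_CS.
Qed.

Lemma mx_bound M v : vnorm (M *m v) <= Kb M * vnorm v.
Proof.
have h : vnorm (M *m v) ^+ 2 <= Kb M * vnorm v * vnorm (M *m v).
  rewrite vnorm_sq; apply: le_trans (Re_le_cabs _) _; exact: cdot_bound.
have [z|p] := eqVneq (vnorm (M *m v)) 0; first by rewrite z mulr_ge0 ?Kb_ge0 ?vnorm_ge0.
have p' : 0 < vnorm (M *m v) by rewrite lt_def p vnorm_ge0.
by move: h; rewrite expr2 ler_pM2r.
Qed.

End Bound.

End Part6.

Section Part7.
Set Implicit Arguments. Unset Strict Implicit. Unset Printing Implicit Defensive.
Local Open Scope classical_set_scope.

Section Sups.
Variable R : realType.

Lemma sup_empty (E : set R) : ~ (E !=set0) -> sup E = 0.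
Proof.
move=> hne; have -> : E = set0 by apply/seteqP; split => x // Ex; apply: hne; exists x.
exact: sup0.
Qed.

Lemma le_sup_elem (E : set R) x : has_ubound E -> E x -> x <= sup E.
Proof. by move=> hu Ex; apply: sup_upper_bound => //; split => //; exists x. Qed.

Lemma sup_ge0 (E : set R) : has_ubound E -> (forall x, E x -> 0 <= x) -> 0 <= sup E.
Proof.
move=> hu h; have [[x Ex]|hne] := pselect (E !=set0); last by rewrite sup_empty.
by apply: le_trans (h x Ex) (le_sup_elem hu Ex).
Qed.

Lemma sup_le_b (E : set R) b : 0 <= b -> (forall x, E x -> x <= b) -> sup E <= b.
Proof.
move=> b0 h; have [ne|hne] := pselect (E !=set0); last by rewrite sup_empty.
by apply: ge_sup => // x Ex; apply: h.
Qed.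

End Sups.

Section Op.
Variable R : realType.
Local Notation C := R[i].
Local Notation cj := (@Num.conj _).
Variable n : nat.
Implicit Types (x y z u v w : 'cV[C]_n) (M N H A : 'M[C]_n) (a b : C) (q : C).

Lemma opnorm_ubound A : has_ubound [set vnorm (A *m x) | x in [set x : 'cV[C]_n | vnorm x = 1]].
Proof.
exists (Kb A) => _ [x /= hx <-]; apply: le_trans (mx_bound A x) _.
by rewrite hx mulr1.
Qed.

Lemma opnorm_ge A x : vnorm x = 1 -> vnorm (A *m x) <= opnorm A.
Proof. by move=> hx; apply: le_sup_elem (opnorm_ubound A) _; exists x. Qed.

Lemma opnorm_ge0 A : 0 <= opnorm A.
Proof. by apply: sup_ge0 (opnorm_ubound A) _ => _ [x _ <-]; apply: vnorm_ge0. Qed.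

Lemma qrange_ubound q A : has_ubound [set cabs z | z in qnumrange q A].
Proof.
exists (Kb A) => _ [z [x [y [hx hy _ ->]]] <-].
by apply: le_trans (cdot_bound A x y) _; rewrite hx hy !mulr1.
Qed.

Lemma qrad_ge q A (z : C) : qnumrange q A z -> cabs z <= qnumradius q A.
Proof. by move=> hz; apply: le_sup_elem (qrange_ubound q A) _; exists z. Qed.

Lemma qrad_ge0 q A : 0 <= qnumradius q A.
Proof. by apply: sup_ge0 (qrange_ubound q A) _ => _ [z _ <-]; apply: cabs_ge0. Qed.

Lemma qrad_le_opnorm q A : qnumradius q A <= opnorm A.
Proof.
apply: sup_le_b (opnorm_ge0 A) _ => _ [z [x [y [hx hy _ ->]]] <-].
apply: le_trans (cdot_CS_abs _ _) _; rewrite hy mulr1; exact: opnorm_ge.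
Qed.

End Op.

End Part7.

Section Part8.
Set Implicit Arguments. Unset Strict Implicit. Unset Printing Implicit Defensive.

Section Ortho.
Variable R : realType.
Local Notation C := R[i].
Local Notation cj := (@Num.conj _).
Variable n : nat.
Implicit Types (x y u v w : 'cV[C]_n) (M N H A : 'M[C]_n) (a b : C) (q : C).

Lemma ortho_exists u : (1 < n)%N -> exists z : 'cV[C]_n, cdot u z = 0 /\ cdot z z = 1.
Proof.
move=> n1.
have h0 : (0 < n)%N by apply: ltn_trans n1.
pose i0 : 'I_n := Ordinal h0; pose i1 : 'I_n := Ordinal n1.
have d01 : i1 != i0 by [].
pose z0 : 'cV[C]_n := \col_i (if i == i0 then - cj (u i1 0) else if i == i1 then cj (u i0 0) else 0).
have hz0 : cdot u z0 = 0.
  rewrite /cdot (bigD1 i0) //= (bigD1 i1) //= big1 => [|i /andP[hi1 hi0]].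
    rewrite !mxE eqxx (negbTE d01) eqxx addr0 conjcN !conjcKK; ring.
  by rewrite mxE (negbTE hi0) (negbTE hi1) conjC0 mulr0.
have [N0|Nn0] := eqVneq (cdot z0 z0) 0.
  have u0 : u i0 0 = 0.
    have := cdot_self_eq0 N0 => /matrixP /(_ i1 0); rewrite !mxE (negbTE d01) eqxx.
    by move/eqP; rewrite conjC_eq0 => /eqP.
  exists (\col_i (if i == i0 then 1 else 0)); split.
    rewrite /cdot (bigD1 i0) //= big1 => [|i hi]; first by rewrite mxE eqxx u0 mul0r add0r.
    by rewrite mxE (negbTE hi) conjC0 mulr0.
  rewrite /cdot (bigD1 i0) //= big1 => [|i hi]; first by rewrite mxE eqxx conjC1 mulr1 addr0.
  by rewrite mxE (negbTE hi) mul0r.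
pose r := complex.Re (cdot z0 z0).
have r0 : 0 < r.
  rewrite lt_def cdot_self_Re_ge0 andbT; apply/eqP => h; move/eqP: Nn0; apply.
  by rewrite cdot_self_real -/r h.
pose k : R := (Num.sqrt r)^-1.
exists (k%:C *: z0); split; first by rewrite cdotZr hz0 mulr0.
rewrite cdotZl cdotZr conjcRe cdot_self_real -/r -!realCM.
congr (_%:C).
by rewrite /k mulrA -expr2 exprVn sqr_sqrtr ?ltW // mulVf // gt_eqF.
Qed.

End Ortho.

End Part8.

Section Part9.
Set Implicit Arguments. Unset Strict Implicit. Unset Printing Implicit Defensive.

Section Wq.
Variable R : realType.
Local Notation C := R[i].
Local Notation cj := (@Num.conj _).
Variable n : nat.
Implicit Types (x y u v w : 'cV[C]_n) (M N H A : 'M[C]_n) (a b : C) (q : C).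

Lemma unit_cdot u : vnorm u = 1 -> cdot u u = 1.
Proof. by move=> hu; rewrite -vnorm_sqC hu expr1n. Qed.

Lemma cdot_unit u : cdot u u = 1 -> vnorm u = 1.
Proof. by move=> h; rewrite /vnorm h /= sqrtr1. Qed.

Lemma Wq q A u : ((1 < n)%N \/ cabs q = 1) -> cabs q <= 1 -> vnorm u = 1 ->
  cabs q * cabs (cdot (A *m u) u) <= qnumradius q A.
Proof.
move=> hn hq hu.
pose s := Num.sqrt (1 - n2 q).
have nq1 : n2 q <= 1.
  by rewrite -cabs_sq -(expr1n _ 2) ler_pXn2r ?nnegrE ?cabs_ge0.
have s2 : s ^+ 2 = 1 - n2 q by rewrite sqr_sqrtr // subr_ge0.
have [z [hz0 hzz]] : exists z : 'cV[C]_n, cdot u z = 0 /\ (s ^+ 2)%:C * cdot z z = (s ^+ 2)%:C.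
  case: hn => [n1|q1].
    by have [z [h1 h2]] := ortho_exists u n1; exists z; rewrite h2 mulr1.
  exists 0; rewrite cdot0r; split => //.
  by rewrite s2 -cabs_sq q1 expr1n subrr mul0r.
have uu := unit_cdot hu.
set h := cdot (A *m u) u; set g := cdot (A *m u) z.
have mem t : t ^+ 2 = 1 -> qnumrange q A (q * h + (t * s)%:C * g).
  move=> t2; pose y := cj q *: u + (t * s)%:C *: z.
  exists u, y; split => //.
  - apply: cdot_unit.
    rewrite /y cdotDl !cdotDr !cdotZl !cdotZr conjcKK conjcRe uu hz0.
    rewrite (cdotC u z) hz0 conjC0 !mulr0 addr0 add0r mulr1.
    have -> : (t * s)%:C * ((t * s)%:C * cdot z z) = (s ^+ 2)%:C.
      by rewrite mulrA -realCM -expr2 exprMn t2 mul1r hzz.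
    by rewrite mulrC -n2C -realCD s2 addrC subrK.
  - by rewrite /y cdotDr !cdotZr conjcKK conjcRe uu hz0 mulr0 mulr1 addr0.
  - by rewrite /y cdotDr !cdotZr conjcKK conjcRe -/h -/g.
have w1 := qrad_ge (mem 1 (expr1n _ 2)).
have w2 := qrad_ge (mem (-1) (etrans (sqrrN 1) (expr1n _ 2))).
have e : (2 : R)%:C * (q * h) = (q * h + (1 * s)%:C * g) + (q * h + (-1 * s)%:C * g).
  rewrite mul1r mulN1r realCN.
  have -> : (2 : R)%:C = 2 by rewrite rmorphMn.
  ring.
have := cabsD (q * h + (1 * s)%:C * g) (q * h + (-1 * s)%:C * g).
rewrite -e cabsM cabs_real ger0_norm ?ler0n // -cabsM => h2.
have : 2 * cabs (q * h) <= 2 * qnumradius q A by lra.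
by rewrite ler_pM2l ?ltr0n // cabsM.
Qed.

End Wq.

End Part9.

Section Part10.
Set Implicit Arguments. Unset Strict Implicit. Unset Printing Implicit Defensive.

Section ML.
Variable R : realType.
Local Notation C := R[i].
Local Notation cj := (@Num.conj _).
Variable n : nat.
Implicit Types (x y u v w : 'cV[C]_n) (M N H A : 'M[C]_n) (a b : C) (q : C).

Lemma n2_real (a : R) : n2 (a%:C) = a ^+ 2.
Proof. by rewrite /n2 /= expr0n /= addr0. Qed.

Lemma ML q A (om : C) (s c : R) : ((1 < n)%N \/ cabs q = 1) -> 0 < cabs q <= 1 ->
  n2 om = 1 -> 0 < c -> 0 <= s -> s ^+ 2 + c ^+ 2 = 1 ->
  (forall u, 0 <= complex.Re (cdot ((om *: A) *m u) u)) ->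
  (forall u, c * `|complex.Im (cdot ((om *: A) *m u) u)| <= s * complex.Re (cdot ((om *: A) *m u) u)) ->
  cabs q * c * opnorm A <= qnumradius q A.
Proof.
move=> hn /andP[q0 q1] om1 c0 s0 sc hRe hsec.
have KLh := KL c0 s0 sc hRe hsec.
set w := qnumradius q A.
have w0 : 0 <= w := qrad_ge0 q A.
have eM x y : cdot ((om *: A) *m x) y = om * cdot (A *m x) y by rewrite -scalemxAl cdotZl.
have com : cabs om = 1 by rewrite /cabs -/(n2 om) om1 sqrtr1.
have hRw u : vnorm u = 1 -> cabs q * complex.Re (cdot ((om *: A) *m u) u) <= w.
  move=> hu; apply: le_trans (Wq A hn q1 hu).
  rewrite ler_pM2l //; apply: le_trans (Re_le_cabs _) _.
  by rewrite eM cabsM com mul1r.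
have key x y : vnorm x = 1 -> vnorm y = 1 ->
    (cabs q * c) ^+ 2 * n2 (cdot (A *m x) y) <= w ^+ 2.
  move=> hx hy; have := KLh x y; rewrite eM n2M om1 mul1r => h.
  have hx' := hRw x hx; have hy' := hRw y hy.
  have e1 : (cabs q * c) ^+ 2 * n2 (cdot (A *m x) y) =
     cabs q ^+ 2 * (c ^+ 2 * n2 (cdot (A *m x) y)) by ring.
  rewrite e1; apply: le_trans (_ : cabs q ^+ 2 * (complex.Re (cdot ((om *: A) *m x) x) *
       complex.Re (cdot ((om *: A) *m y) y)) <= _).
    by rewrite ler_pM2l // exprn_gt0.
  have e2 : cabs q ^+ 2 * (complex.Re (cdot ((om *: A) *m x) x) *
       complex.Re (cdot ((om *: A) *m y) y)) =
     (cabs q * complex.Re (cdot ((om *: A) *m x) x)) *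
       (cabs q * complex.Re (cdot ((om *: A) *m y) y)) by ring.
  rewrite e2 expr2; apply: ler_pM => //; apply: mulr_ge0 => //; exact: ltW.
have qc0 : 0 < cabs q * c by rewrite mulr_gt0.
rewrite -ler_pdivlMl //.
apply: sup_le_b; first by rewrite mulr_ge0 // invr_ge0 ltW.
move=> _ [x /= hx <-]; rewrite ler_pdivlMl //.
have [z|nz] := eqVneq (vnorm (A *m x)) 0; first by rewrite z mulr0.
have vp : 0 < vnorm (A *m x) by rewrite lt_def nz vnorm_ge0.
pose k := (vnorm (A *m x))^-1.
pose y := k%:C *: (A *m x).
have hy : vnorm y = 1.
  apply: cdot_unit; rewrite /y cdotZl cdotZr conjcRe -vnorm_sqC -!realCM.
  by rewrite /k mulrA -expr2 exprVn mulVf // expf_neq0.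
have := key x y hx hy.
have -> : cdot (A *m x) y = (vnorm (A *m x))%:C.
  by rewrite /y cdotZr conjcRe -vnorm_sqC -realCM /k expr2 mulrA mulVf ?mul1r.
rewrite n2_real -exprMn ler_pXn2r ?nnegrE //.
by rewrite mulr_ge0 // ?vnorm_ge0 // ltW.
Qed.

End ML.

End Part10.

Section Part11.
Set Implicit Arguments. Unset Strict Implicit. Unset Printing Implicit Defensive.

Section Sect.
Variable R : realType.
Local Notation C := R[i].
Local Notation cj := (@Num.conj _).
Variable n : nat.
Implicit Types (x y u v w : 'cV[C]_n) (M N H A : 'M[C]_n) (a b : C) (q : C).

Lemma ReMr (k : R) (z : C) : complex.Re (k%:C * z) = k * complex.Re z.
Proof. by case: z => a b /=; rewrite mul0r subr0. Qed.

Lemma ImMr (k : R) (z : C) : complex.Im (k%:C * z) = k * complex.Im z.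
Proof. by case: z => a b /=; rewrite mul0r addr0. Qed.

Lemma scale_h A u (k : R) :
  cdot (A *m (k%:C *: u)) (k%:C *: u) = (k ^+ 2)%:C * cdot (A *m u) u.
Proof. by rewrite -scalemxAr cdotZl cdotZr conjcRe mulrA -realCM -expr2. Qed.

Lemma h0 A : cdot (A *m (0 : 'cV[C]_n)) 0 = 0.
Proof. by rewrite mulmx0 cdot0l. Qed.

Lemma normalize u : u != 0 ->
  vnorm ((vnorm u)^-1%:C *: u) = 1 /\ 0 < ((vnorm u)^-1) ^+ 2.
Proof.
move=> nu; have vp := vnorm_gt0 nu; split; last by rewrite exprn_gt0 // invr_gt0.
apply: cdot_unit; rewrite cdotZl cdotZr conjcRe -vnorm_sqC -!realCM.
by rewrite mulrA -expr2 exprVn mulVf // expf_neq0 // gt_eqF.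
Qed.

Lemma sect_all alpha A : sectorial alpha A -> forall u,
  (u != 0 -> 0 < complex.Re (cdot (A *m u) u)) /\
  0 <= complex.Re (cdot (A *m u) u) /\
  `|complex.Im (cdot (A *m u) u)| <= tan alpha * complex.Re (cdot (A *m u) u).
Proof.
move=> hs u; have [->|nu] := eqVneq u 0.
  by rewrite h0 /= normr0 mulr0 lexx; split => //; rewrite eqxx.
have [hv kp] := normalize nu.
have [h1 h2] := hs _ (ex_intro _ _ (conj hv erefl)).
move: h1 h2; rewrite scale_h ReMr ImMr normrM (ger0_norm (ltW kp)) => h1 h2.
move: h1; rewrite pmulr_rgt0 // => h1.
move: h2; rewrite mulrCA ler_pM2l // => h2.
by split => //; split => //; apply: ltW.
Qed.

Lemma sect_cos alpha A : 0 <= alpha < pi / 2 -> sectorial alpha A -> forall u,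
  0 <= complex.Re (cdot (A *m u) u) /\
  cos alpha * `|complex.Im (cdot (A *m u) u)| <= sin alpha * complex.Re (cdot (A *m u) u).
Proof.
move=> /andP[a0 a1] hs u; have [_ [h1 h2]] := sect_all hs u; split => //.
have c0 : 0 < cos alpha.
  apply: cos_gt0_pihalf; rewrite a1 andbT; apply: lt_le_trans a0.
  by rewrite oppr_lt0 divr_gt0 // pi_gt0.
have e : cos alpha * (tan alpha * complex.Re (cdot (A *m u) u)) =
  sin alpha * complex.Re (cdot (A *m u) u).
  by rewrite /tan; field; rewrite gt_eqF.
by rewrite -e ler_pM2l.
Qed.

End Sect.

End Part11.

Section Part12.
Set Implicit Arguments. Unset Strict Implicit. Unset Printing Implicit Defensive.

Section AD.
Variable R : realType.
Local Notation C := R[i].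
Local Notation cj := (@Num.conj _).
Variable n : nat.
Implicit Types (x y u v w : 'cV[C]_n) (M N H A : 'M[C]_n) (a b : C) (q : C).

Lemma isq2 : ((Num.sqrt (2 : R))^-1) ^+ 2 + ((Num.sqrt (2 : R))^-1) ^+ 2 = 1.
Proof.
rewrite exprVn sqr_sqrtr ?ler0n //.
have h2 : (2 : R) != 0 by rewrite pnatr_eq0.
by field.
Qed.

Lemma isq2_gt0 : 0 < (Num.sqrt (2 : R))^-1.
Proof. by rewrite invr_gt0 sqrtr_gt0 ltr0n. Qed.

Lemma AD_cond A : accretive_dissipative A ->
  let c := (Num.sqrt (2 : R))^-1 in
  (forall u, 0 <= complex.Re (cdot ((Complex c (- c) *: A) *m u) u)) /\
  (forall u, c * `|complex.Im (cdot ((Complex c (- c) *: A) *m u) u)| <=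
             c * complex.Re (cdot ((Complex c (- c) *: A) *m u) u)).
Proof.
move=> [[_ hR] [_ hI]] c.
have c0 : 0 < c := isq2_gt0.
have pos u : 0 <= complex.Re (cdot (A *m u) u) /\ 0 <= complex.Im (cdot (A *m u) u).
  have [->|nu] := eqVneq u 0; first by rewrite h0.
  have h1 := hR u nu; rewrite realpart_h ltcR in h1.
  have h2 := hI u nu; rewrite imagpart_h ltcR in h2.
  by rewrite !ltW.
have eM u : cdot ((Complex c (- c) *: A) *m u) u = Complex c (- c) * cdot (A *m u) u.
  by rewrite -scalemxAl cdotZl.
split => u; rewrite eM; have := pos u; case: (cdot (A *m u) u) => a b /= [a0 b0].
  have -> : c * a - - c * b = c * (a + b) by ring.
  by apply: mulr_ge0; [exact: ltW | exact: addr_ge0].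
rewrite ler_pM2l //.
have -> : c * b + - c * a = c * (b - a) by ring.
have -> : c * a - - c * b = c * (a + b) by ring.
rewrite normrM (ger0_norm (ltW c0)) ler_pM2l //.
rewrite ler_norml; apply/andP; split; lra.
Qed.

End AD.

End Part12.

Section Part13.
Set Implicit Arguments. Unset Strict Implicit. Unset Printing Implicit Defensive.

Lemma bernoulli (R : realType) (r : R) (k : nat) : 1 <= r -> 1 + k%:R * (r - 1) <= r ^+ k.
Proof.
move=> r1; elim: k => [|k IH]; first by rewrite mul0r addr0 expr0.
rewrite exprS.
apply: le_trans (_ : r * (1 + k%:R * (r - 1)) <= _); last first.
  by apply: ler_wpM2l => //; apply: le_trans r1.
have k0 : 0 <= (k%:R : R) by rewrite ler0n.
rewrite -natr1; have := mulr_ge0 k0 (sqr_ge0 (r - 1)); nra.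
Qed.

Lemma seq_lemma (R : realType) (a : nat -> R) (C : R) :
  (forall k, 0 <= a k) -> 0 < a 0%N ->
  (forall k, a k.+1 ^+ 2 <= a k * a k.+2) -> (forall k, a k <= C) -> a 1%N <= a 0%N.
Proof.
move=> a0 ap hlc hC.
pose r := a 1%N / a 0%N.
have r0 : 0 <= r by rewrite divr_ge0 // ltW.
have step : forall k, r * a k <= a k.+1.
  elim=> [|k IH]; first by rewrite /r mulfVK ?gt_eqF.
  have [z|nz] := eqVneq (a k.+1) 0; first by rewrite z mulr0.
  have p1 : 0 < a k.+1 by rewrite lt_def nz a0.
  have pk : 0 < a k.
    rewrite lt_def a0 andbT; apply/eqP => z; have := hlc k; rewrite z mul0r => h.
    have : 0 < a k.+1 ^+ 2 by rewrite exprn_gt0.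
    by rewrite ltNge h.
  have h1 := hlc k.
  have : a k * (r * a k.+1) <= a k * a k.+2.
    apply: le_trans h1; rewrite expr2 mulrCA mulrA ler_pM2r //; nra.
  by rewrite ler_pM2l.
have geo : forall k, r ^+ k * a 0%N <= a k.
  elim=> [|k IH]; first by rewrite expr0 mul1r.
  apply: le_trans _ (step k); rewrite exprS -mulrA; exact: ler_wpM2l.
have r1 : r <= 1.
  rewrite leNgt; apply/negP => r1.
  have ra : 0 < (r - 1) * a 0%N by rewrite mulr_gt0 // subr_gt0.
  have C0 : 0 <= C by apply: le_trans (a0 0%N) (hC 0%N).
  have K0 : 0 <= C / ((r - 1) * a 0%N) by rewrite divr_ge0 // ltW.
  have := archi_boundP K0; rewrite ltr_pdivrMr //.
  move: (Num.Def.archi_bound _) => k hk.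
  have b := bernoulli k (ltW r1).
  have g := geo k; have c := hC k.
  have : a 0%N * (1 + k%:R * (r - 1)) <= C.
    apply: le_trans c; apply: le_trans g; rewrite mulrC; apply: ler_wpM2r => //; exact: ltW.
  nra.
have -> : a 1%N = r * a 0%N by rewrite /r mulfVK // gt_eqF.
by rewrite -[leRHS]mul1r ler_wpM2r // ltW.
Qed.

End Part13.

Section Part14.
Set Implicit Arguments. Unset Strict Implicit. Unset Printing Implicit Defensive.

Section LH.
Variable R : realType.
Local Notation C := R[i].
Local Notation cj := (@Num.conj _).
Local Notation ii := ('i%C : C).
Variable n : nat.
Implicit Types (x y u v w : 'cV[C]_n) (M N H A : 'M[C]_n) (a b : C) (q : C).

Lemma ReD (a b : C) : complex.Re (a + b) = complex.Re a + complex.Re b.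
Proof. by case: a; case: b. Qed.
Lemma ReB (a b : C) : complex.Re (a - b) = complex.Re a - complex.Re b.
Proof. by case: a; case: b. Qed.
Lemma Re_iireal (k : R) : complex.Re (ii * k%:C) = 0.
Proof. by rewrite /= mul0r mul1r subrr. Qed.

Lemma vnorm_le v w : complex.Re (cdot v v) <= complex.Re (cdot w w) -> vnorm v <= vnorm w.
Proof. by move=> h; rewrite /vnorm ler_sqrt // cdot_self_Re_ge0. Qed.

Lemma LH alpha A : sectorial alpha A -> sectorial alpha (A *m A) ->
  forall x, `|complex.Im (cdot (A *m x) x)| <= complex.Re (cdot (A *m x) x).
Proof.
move=> hA hA2 x.
have sA := sect_all hA; have sA2 := sect_all hA2.
have [->|nx] := eqVneq x 0; first by rewrite h0 /= normr0.
have hR := realpart_herm A; have hI := imagpart_herm A.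
have hRr v : cdot (realpart A *m v) v = (complex.Re (cdot (A *m v) v))%:C by rewrite realpart_h.
have hIr v : cdot (imagpart A *m v) v = (complex.Im (cdot (A *m v) v))%:C by rewrite imagpart_h.
have eA := decomp A.
have eA' : adjmx A = realpart A - ii *: imagpart A.
  have := congr1 (@adjmx R n) eA.
  by rewrite adjmxD (adjmxZ ii (imagpart A)) hR hI conj_ii scaleNr.
move: (realpart A) (imagpart A) hR hI hRr hIr eA eA' => Rm Im hR hI hRr hIr eA eA'.
have F4 v : vnorm (Im *m v) <= vnorm (Rm *m v).
  apply: vnorm_le; have [_ [h _]] := sA2 v.
  move: h; rewrite -mulmxA cdot_adj eA' eA mulmxDl mulmxBl -!scalemxAl.
  rewrite cdotDl !cdotBr !cdotZl !cdotZr conj_ii.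
  rewrite (cdotC (Rm *m v) (Im *m v)).
  set P := cdot (Rm *m v) (Rm *m v); set Q := cdot (Im *m v) (Im *m v).
  set X := cdot (Rm *m v) (Im *m v).
  have -> : P - - ii * X + (ii * cj X - ii * (- ii * Q)) = P + (ii * ii) * Q + ii * (X + cj X) by ring.
  rewrite ii2 mulN1r -conjcE addcJ.
  have -> : (2%:R : C) = (2:R)%:C by rewrite rmorphMn.
  rewrite -realCM.
  by rewrite ReD Re_iireal addr0 ReB subr_ge0.
have F3 v : v != 0 -> 0 < complex.Re (cdot (Rm *m v) v).
  by move=> nv; rewrite hRr /=; have [h _] := sA v; apply: h.
have F3' v : 0 <= complex.Re (cdot (Rm *m v) v).
  by rewrite hRr /=; have [_ [h _]] := sA v.
have uR : Rm \in unitmx.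
  rewrite unitmxE unitfE -det_tr; apply/negP => /det0P [w wn0 hw].
  have hv : Rm *m w^T = 0 by have := congr1 trmx hw; rewrite trmx_mul trmxK trmx0.
  have nv : w^T != 0.
    by apply: contra wn0 => /eqP h; rewrite -(trmxK w) h trmx0.
  by have := F3 _ nv; rewrite hv cdot0l ltxx.
pose L := invmx Rm *m Im.
have RL : Rm *m L = Im by rewrite /L mulKVmx.
pose Ki := Kb (invmx Rm).
have bnd v : vnorm v <= Ki * vnorm (Rm *m v).
  by have := mx_bound (invmx Rm) (Rm *m v); rewrite mulKmx.
pose w k := iter k (mulmx L) x.
have w0 : w 0%N = x by [].
have RwS k : Rm *m w k.+1 = Im *m w k by rewrite /= mulmxA RL.
move: w w0 RwS => w w0 RwS.
pose a k := complex.Re (cdot (Rm *m w k) (w k)).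
have a0 k : 0 <= a k by apply: F3'.
have ap : 0 < a 0%N by rewrite /a w0 F3.
have hlc k : a k.+1 ^+ 2 <= a k * a k.+2.
  have e : cdot (Rm *m w k.+1) (w k.+1) = cdot (Rm *m w k) (w k.+2).
    by rewrite RwS cdot_adj hI -RwS cdot_adj2 hR.
  have := CS (w k) (w k.+2) hR F3'; rewrite -e.
  by rewrite (herm_real _ hR) n2_real.
have vb k : vnorm (Rm *m w k) <= vnorm (Rm *m x).
  elim: k => [|k IH]; first by rewrite w0.
  by rewrite RwS; apply: le_trans IH.
have hC k : a k <= vnorm (Rm *m x) * (Ki * vnorm (Rm *m x)).
  apply: le_trans (Re_le_cabs _) _; apply: le_trans (cdot_CS_abs _ _) _.
  apply: ler_pM; rewrite ?vnorm_ge0 //; apply: le_trans (bnd _) _.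
  by apply: ler_wpM2l; [exact: Kb_ge0 | exact: vb].
have a10 := seq_lemma a0 ap hlc hC.
have := CS (w 1%N) (w 0%N) hR F3'; rewrite -/(a 1%N) -/(a 0%N) RwS w0 (hIr x) n2_real => h.
have ea0 : a 0%N = complex.Re (cdot (A *m x) x) by rewrite /a w0 hRr.
have hRe : 0 <= complex.Re (cdot (A *m x) x) by have [_ [h' _]] := sA x.
rewrite -(@ler_pXn2r _ 2) ?nnegrE ?normr_ge0 // real_normK ?num_real //.
apply: le_trans h _; rewrite -ea0 expr2 ler_wpM2r //.
Qed.

End LH.

End Part14.

Theorem theorem2p10 (R : realType) (n : nat) (q : R[i]) (A : 'M[R[i]]_n) :
  0 < cabs q <= 1 ->
  (1 < n)%N \/ cabs q = 1 ->
  ((forall alpha : R, 0 <= alpha < pi / 2 -> sectorial alpha A ->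
      cabs q * cos alpha * opnorm A <= qnumradius q A <= opnorm A)
   /\
   ((exists alpha : R, 0 <= alpha < pi / 2 /\
        sectorial alpha A /\ sectorial alpha (A *m A))
      \/ accretive_dissipative A ->
      cabs q / Num.sqrt 2 * opnorm A <= qnumradius q A <= opnorm A)).
Proof.
move=> hq hn.
have n21 : n2 (1 : R[i]) = 1 by rewrite /n2 /= expr1n expr0n /= addr0.
split.
  move=> alpha ha hs; rewrite qrad_le_opnorm andbT.
  have /andP[a0 a1] := ha.
  have c0 : 0 < cos alpha.
    apply: cos_gt0_pihalf; rewrite a1 andbT; apply: lt_le_trans a0.
    by rewrite oppr_lt0 divr_gt0 // pi_gt0.
  have s0 : 0 <= sin alpha.
    apply: sin_ge0_pi; rewrite a0 /=; apply: le_trans (ltW a1) _.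
    by rewrite ler_pdivrMr // ler_peMr // ?ler1n // ltW // pi_gt0.
  have sc : sin alpha ^+ 2 + cos alpha ^+ 2 = 1 by rewrite addrC cos2Dsin2.
  apply: (ML hn hq n21 c0 s0 sc) => u; rewrite scale1r; have [h1 h2] := sect_cos ha hs u => //.
move=> hb; rewrite qrad_le_opnorm andbT.
have c0 := @isq2_gt0 R.
have sc := @isq2 R.
case: hb => [[alpha [ha [hs hs2]]]|had].
  apply: (ML hn hq n21 c0 (ltW c0) sc) => u; rewrite scale1r.
    by have [_ [h _]] := sect_all hs u.
  by apply: ler_wpM2l; [exact: ltW | exact: LH hs hs2 u].
have [h1 h2] := AD_cond had.
have om1 : n2 (Complex (Num.sqrt 2)^-1 (- (Num.sqrt (2 : R))^-1)) = 1.
  by rewrite /n2 /= sqrrN.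
exact: (ML hn hq om1 c0 (ltW c0) sc h1 h2).
Qed.
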